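(* Let $G$ be a connected undirected graph without self-loops on $n$ vertices with degrees $d_i$ and Laplacian $L$, $C=\mathrm{diag}(c_1,\dots,c_n)$ with positive rationals $c_i$ of $O(\log n)$ bits and $c_id_i<1$, $P=I_n-CL$, $\pi=(\mathrm{tr}\,C^{-1})^{-1}C^{-1}\mathbf{1}$, and $\Gamma=\lim_{t\to\infty}\bigl(-\mathbf{1}\pi^Tt+\sum_{s=0}^{t-1}P^s\bigr)$. Then $(I_n-P\,|\,\mathbf{1})$ is invertible and $\Gamma=(I_n-\mathbf{1}\pi^T\,|\,\mathbf{0})\,(I_n-P\,|\,\mathbf{1})^{-1}$.
   Context: For an $n\times n$ matrix $Y$ and $y\in\mathbb{R}^n$, $(Y\,|\,y)$ denotes the matrix obtained from $Y$ by replacing its last column with $y$. $\mathbf{1}$ is the all-ones vector and $\mathbf{0}$ the zero vector. *)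

(* Defs.v *)
From HB Require Import structures.
From mathcomp Require Import all_boot all_order all_algebra.
From mathcomp Require Import all_classical all_reals all_analysis.
Set Implicit Arguments. Unset Strict Implicit. Unset Printing Implicit Defensive.
Import Order.TTheory GRing.Theory Num.Theory.
Local Open Scope ring_scope.

Definition simple_graph (n : nat) (e : rel 'I_n) : Prop :=
  symmetric e /\ irreflexive e.

Definition graph_connected (n : nat) (e : rel 'I_n) : Prop :=
  forall i j : 'I_n, connect e i j.

Definition deg (n : nat) (e : rel 'I_n) (i : 'I_n) : nat := #|[set j | e i j]|.

Definition laplacian (R : ringType) (n : nat) (e : rel 'I_n) : 'M[R]_n :=
  \matrix_(i, j) ((deg e i)%:R *+ (i == j) - (e i j)%:R).

(* (Y | y): Y with its last column (index n-1) replaced by y *)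
Definition repl_last (R : Type) (n : nat) (Y : 'M[R]_n) (y : 'cV[R]_n) : 'M[R]_n :=
  \matrix_(i, j) (if (j : nat) == n.-1 then y i ord0 else Y i j).

Definition ones (R : ringType) (n : nat) : 'cV[R]_n := const_mx 1.

(* Main.v *)
Require Import Defs.
From HB Require Import structures.
From mathcomp Require Import all_boot all_order all_algebra.
From mathcomp Require Import all_classical all_reals all_analysis.
From mathcomp Require Import ring lra.
Import Order.TTheory GRing.Theory Num.Theory.
Import numFieldNormedType.Exports.
Set Implicit Arguments. Unset Strict Implicit. Unset Printing Implicit Defensive.
Local Open Scope classical_set_scope.
Local Open Scope ring_scope.

Section Stoch.
Variables (R : realType) (n : nat).

Definition nonnegm (M : 'M[R]_n) := forall i j, 0 <= M i j.
Definition stoch (M : 'M[R]_n) := nonnegm M /\ M *m ones R n = ones R n.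

Lemma rowsum (M : 'M[R]_n) i : (M *m ones R n) i 0 = \sum_j M i j.
Proof. by rewrite mxE; apply: eq_bigr => j _; rewrite mxE mulr1. Qed.

Lemma stoch_rows M : stoch M -> forall i, \sum_j M i j = 1.
Proof. by case=> _ H i; rewrite -rowsum H mxE. Qed.

Lemma stochM M N : stoch M -> stoch N -> stoch (M *m N).
Proof.
case=> HM1 HM2 [HN1 HN2]; split.
  by move=> i j; rewrite mxE; apply: sumr_ge0 => k _; apply: mulr_ge0.
by rewrite -mulmxA HN2 HM2.
Qed.

Lemma stoch1 : stoch 1.
Proof.
split; last by rewrite mul1mx.
by move=> i j; rewrite mxE; case: (i == j).
Qed.

Lemma stochX M k : stoch M -> stoch (M ^+ k).
Proof.
move=> HM; elim: k => [|k IH]; first by rewrite expr0; exact: stoch1.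
by rewrite exprS -mulmxE; apply: stochM.
Qed.

Lemma prod_lb (M N : 'M[R]_n) i k j : nonnegm M -> nonnegm N ->
  M i k * N k j <= (M *m N) i j.
Proof.
move=> HM HN; rewrite mxE (bigD1 k) //= lerDl.
by apply: sumr_ge0 => l _; apply: mulr_ge0.
Qed.

Lemma sum_constn (x : R) : \sum_(k < n) x = n%:R * x.
Proof. by rewrite sumr_const card_ord mulr_natl. Qed.

Lemma interval_step (M : 'M[R]_n) d a b (x : 'cV[R]_n) :
  stoch M -> 0 <= d -> (forall i j, d <= M i j) ->
  (forall k, a <= x k 0 <= b) ->
  exists a' b', (forall i, a' <= (M *m x) i 0 <= b') /\
                b' - a' = (1 - n%:R * d) * (b - a).
Proof.
move=> HM d0 Hd Hx.
exists (a + d * \sum_k (x k 0 - a)), (b - d * \sum_k (b - x k 0)); split.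
  move=> i; have Hr := @stoch_rows M HM i.
  rewrite mxE; apply/andP; split.
    have -> : a + d * \sum_k (x k 0 - a) = \sum_k (M i k * a + d * (x k 0 - a)).
      by rewrite [RHS]big_split /= -mulr_suml Hr mul1r mulr_sumr.
    apply: ler_sum => k _; have /andP[h1 h2] := Hx k; have h3 := Hd i k.
    rewrite -subr_ge0.
    have -> : M i k * x k 0 - (M i k * a + d * (x k 0 - a)) = (M i k - d) * (x k 0 - a) by ring.
    by apply: mulr_ge0; rewrite subr_ge0.
  have -> : b - d * \sum_k (b - x k 0) = \sum_k (M i k * b - d * (b - x k 0)).
    by rewrite [RHS]sumrB -mulr_suml Hr mul1r mulr_sumr.
  apply: ler_sum => k _; have /andP[h1 h2] := Hx k; have h3 := Hd i k.
  rewrite -subr_ge0.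
  have -> : M i k * b - d * (b - x k 0) - M i k * x k 0 = (M i k - d) * (b - x k 0) by ring.
  by apply: mulr_ge0; rewrite subr_ge0.
have -> : b - d * \sum_k (b - x k 0) - (a + d * \sum_k (x k 0 - a))
   = (b - a) - d * (\sum_k (b - x k 0) + \sum_k (x k 0 - a)) by ring.
rewrite -big_split /= (eq_bigr (fun=> b - a)); last by move=> k _; ring.
rewrite sum_constn; ring.
Qed.

End Stoch.

Section Iter.
Variables (R : realType) (n : nat).

Lemma iter_bound (P : 'M[R]_n) K d (x : 'cV[R]_n) a b :
  stoch P -> 0 <= d -> (forall i j, d <= (P ^+ K) i j) ->
  0 <= 1 - n%:R * d ->
  (forall k, a <= x k 0 <= b) ->
  forall q r, exists a' b', (forall i, a' <= (P ^+ (K * q + r) *m x) i 0 <= b') /\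
     b' - a' <= (1 - n%:R * d) ^+ q * (b - a).
Proof.
move=> HP d0 HK rho0 Hx; elim=> [|q IH] r.
  rewrite muln0 add0n; elim: r => [|r [a' [b' [H1 H2]]]].
    exists a, b; split; first by move=> i; rewrite expr0 mul1mx.
    by rewrite expr0 mul1r.
  have [a2 [b2 [H3 H4]]] := @interval_step R n P 0 a' b' _ HP (lexx 0) (proj1 HP) H1.
  exists a2, b2; split; first by move=> i; rewrite exprS -mulmxE -mulmxA.
  by rewrite H4 mulr0 subr0 mul1r.
have [a' [b' [H1 H2]]] := IH r.
have [a2 [b2 [H3 H4]]] := @interval_step R n (P ^+ K) d a' b' _ (stochX K HP) d0 HK H1.
exists a2, b2; split.
  by move=> i; rewrite mulnS -addnA exprD -mulmxE -mulmxA.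
rewrite H4 exprS -mulrA; exact: ler_wpM2l.
Qed.

Lemma conv_bound (p : 'cV[R]_n) (y : 'cV[R]_n) a b :
  (forall k, 0 <= p k 0) -> \sum_k p k 0 = 1 ->
  (forall k, a <= y k 0 <= b) -> a <= (p^T *m y) 0 0 <= b.
Proof.
move=> p0 p1 Hy; rewrite mxE; apply/andP; split.
  rewrite -[a]mul1r -p1 mulr_suml; apply: ler_sum => k _; rewrite mxE.
  by have := p0 k; case/andP: (Hy k) => h1 h2 h3; nra.
rewrite -[b]mul1r -p1 mulr_suml; apply: ler_sum => k _; rewrite mxE.
by have := p0 k; case/andP: (Hy k) => h1 h2 h3; nra.
Qed.

Lemma pT_X (P : 'M[R]_n) (p : 'cV[R]_n) k : p^T *m P = p^T -> p^T *m P ^+ k = p^T.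
Proof.
move=> H; elim: k => [|k IH]; first by rewrite expr0 mulmx1.
by rewrite exprSr -mulmxE mulmxA IH H.
Qed.

Lemma main_bound (P : 'M[R]_n) (p : 'cV[R]_n) K d (x : 'cV[R]_n) a b :
  stoch P -> 0 <= d -> (forall i j, d <= (P ^+ K) i j) ->
  0 <= 1 - n%:R * d ->
  (forall k, 0 <= p k 0) -> \sum_k p k 0 = 1 -> p^T *m P = p^T ->
  (forall k, a <= x k 0 <= b) ->
  forall t i, `|(P ^+ t *m x) i 0 - (p^T *m x) 0 0| <= (1 - n%:R * d) ^+ (t %/ K) * (b - a).
Proof.
move=> HP d0 HK rho0 p0 p1 pP Hx t i.
have [a' [b' [H1 H2]]] := iter_bound HP d0 HK rho0 Hx (t %/ K) (t %% K).
rewrite mulnC -divn_eq in H1.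
have E : (p^T *m x) 0 0 = (p^T *m (P ^+ t *m x)) 0 0 by rewrite mulmxA pT_X.
have := conv_bound p0 p1 H1; rewrite -E => /andP[h1 h2].
have /andP[h3 h4] := H1 i.
apply: le_trans H2; rewrite ler_norml; apply/andP; split; lra.
Qed.

End Iter.

Lemma small_pow (R : realType) (rho eps : R) : 0 <= rho -> rho < 1 -> 0 < eps ->
  exists q, rho ^+ q < eps.
Proof.
move=> r0 r1 e0.
have : `|rho| < 1 by rewrite ger0_norm.
move/cvg_expr/cvgrPdist_lt/(_ eps e0) => [N _ HN].
exists N; have := HN N (leqnn N); rewrite /= sub0r normrN ger0_norm //.
exact: exprn_ge0.
Qed.

Lemma zero_of_pow (R : realType) (rho z W : R) : 0 <= rho -> rho < 1 ->
  (forall q, z <= rho ^+ q * W) -> z <= 0.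
Proof.
move=> r0 r1 H; rewrite leNgt; apply/negP => z0.
have [W0|W0] := leP W 0.
  have := H 0%N; rewrite expr0 mul1r => h; lra.
have [q Hq] := small_pow r0 r1 (divr_gt0 z0 W0).
have := H q; rewrite ltr_pdivlMr // in Hq.
move=> h; lra.
Qed.

Lemma fin_lb (R : realType) (T : finType) (f : T -> R) : (forall x, 0 < f x) ->
  exists d, 0 < d /\ forall x, d <= f x.
Proof.
move=> Hf.
suff HH : forall s : seq T, exists d, 0 < d /\ forall x, x \in s -> d <= f x.
  have [d [d0 Hd]] := HH (enum T); by exists d; split => // x; apply: Hd; rewrite mem_enum.
elim=> [|y s [d [d0 Hd]]]; first by exists 1.
exists (Num.min d (f y)); split; first by rewrite lt_min d0 Hf.
move=> x; rewrite in_cons => /orP[/eqP->|xs]; rewrite ge_min.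
  by rewrite lexx orbT.
by rewrite Hd.
Qed.

Section Graph.
Variables (R : realType) (n : nat) (e : rel 'I_n) (c : 'I_n -> rat).

Definition Cm : 'M[R]_n := diag_mx (\row_i ratr (c i)).
Definition Lm : 'M[R]_n := laplacian R e.
Definition Pm : 'M[R]_n := 1%:M - Cm *m Lm.
Definition trC : R := \tr (diag_mx (\row_i (ratr (c i))^-1 : 'rV[R]_n)).
Definition pim : 'cV[R]_n := trC^-1 *: \col_i (ratr (c i))^-1.

Lemma deg_sum i : ((deg e i)%:R : R) = \sum_j ((e i j)%:R).
Proof.
rewrite /deg -sum1_card big_mkcond /= natr_sum; apply: eq_bigr => j _.
by rewrite inE; case: (e i j).
Qed.

Lemma lap_entry i j : Lm i j = (deg e i)%:R *+ (i == j) - (e i j)%:R.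
Proof. by rewrite /Lm /laplacian mxE. Qed.

Lemma lap_row0 : Lm *m ones R n = 0.
Proof.
apply/matrixP => i k; rewrite (ord1 k) rowsum !mxE.
rewrite (eq_bigr (fun j => (deg e i)%:R *+ (i == j) - (e i j)%:R)); last first.
  by move=> j _; rewrite lap_entry.
rewrite sumrB -deg_sum (bigD1 i) //= eqxx mulr1n big1 ?addr0 ?subrr //.
by move=> j /negbTE; rewrite eq_sym => ->.
Qed.

Lemma lap_sym : simple_graph e -> forall i j, Lm i j = Lm j i.
Proof.
case=> Hs Hi i j; rewrite !lap_entry (Hs i j).
by case: eqP => [->|]; rewrite ?eqxx // eq_sym => /eqP/negbTE ->.
Qed.

Lemma CL_entry i j : (Cm *m Lm) i j = ratr (c i) * Lm i j.
Proof. by rewrite /Cm mul_diag_mx !mxE. Qed.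

Lemma P_entry i j : Pm i j = (i == j)%:R - ratr (c i) * Lm i j.
Proof. by rewrite -CL_entry /Pm !mxE. Qed.

Lemma ratr_deg_lt i : c i * (deg e i)%:R < 1 -> ratr (c i) * (deg e i)%:R < (1 : R).
Proof.
move=> H; have := H; rewrite -(ltr_rat R) rmorphM /= ratr_nat rmorph1 //.
Qed.

Lemma P_stoch : simple_graph e -> (forall i, 0 < c i) ->
  (forall i, c i * (deg e i)%:R < 1) -> stoch Pm.
Proof.
case=> Hs Hirr Hc Hcd; split.
  move=> i j; rewrite P_entry lap_entry.
  have ci : (0 : R) <= ratr (c i) by rewrite ler0q ltW.
  case: eqP => [<-|/eqP ij].
    rewrite Hirr !mulr1n subr0; have := ratr_deg_lt (Hcd i); lra.
  rewrite !mulr0n !sub0r mulrN opprK; apply: mulr_ge0 => //.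
by rewrite /Pm mulmxBl mul1mx -mulmxA lap_row0 mulmx0 subr0.
Qed.

Lemma P_diag_pos : simple_graph e -> (forall i, c i * (deg e i)%:R < 1) ->
  forall i, 0 < Pm i i.
Proof.
case=> Hs Hirr Hcd i; rewrite P_entry lap_entry eqxx Hirr !mulr1n subr0.
have := ratr_deg_lt (Hcd i); lra.
Qed.

Lemma P_edge_pos : simple_graph e -> (forall i, 0 < c i) ->
  forall i j, e i j -> 0 < Pm i j.
Proof.
case=> Hs Hirr Hc i j eij; rewrite P_entry lap_entry eij.
have -> : i == j = false by apply/negbTE; apply: contraTneq eij => ->; rewrite Hirr.
rewrite !mulr0n !sub0r mulrN opprK mulr1; by rewrite ltr0q.
Qed.

Lemma trC_E : trC = \sum_j (ratr (c j))^-1.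
Proof. by rewrite /trC mxtrace_diag; apply: eq_bigr => j _; rewrite mxE. Qed.

Lemma trC_pos : (0 < n)%N -> (forall i, 0 < c i) -> 0 < trC.
Proof.
move=> n0 Hc; rewrite trC_E (bigD1 (Ordinal n0)) //=.
apply: ltr_pwDl; first by rewrite invr_gt0 ltr0q.
by apply: sumr_ge0 => j _; rewrite invr_ge0 ler0q ltW.
Qed.

Lemma pi_entry k : pim k 0 = trC^-1 * (ratr (c k))^-1.
Proof. by rewrite /pim !mxE. Qed.

Lemma pi_nonneg : (forall i, 0 < c i) -> forall k, 0 <= pim k 0.
Proof.
move=> Hc k; rewrite pi_entry; apply: mulr_ge0; last by rewrite invr_ge0 ler0q ltW.
rewrite invr_ge0 trC_E; apply: sumr_ge0 => j _; by rewrite invr_ge0 ler0q ltW.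
Qed.

Lemma pi_sum1 : (0 < n)%N -> (forall i, 0 < c i) -> \sum_k pim k 0 = 1.
Proof.
move=> n0 Hc; rewrite (eq_bigr _ (fun k _ => pi_entry k)) -mulr_sumr -trC_E.
by rewrite mulVf // gt_eqF // trC_pos.
Qed.

Lemma pi_one : (0 < n)%N -> (forall i, 0 < c i) -> pim^T *m ones R n = 1.
Proof.
move=> n0 Hc; apply/matrixP => i j; rewrite !ord1 !mxE -(pi_sum1 n0 Hc).
by apply: eq_bigr => k _; rewrite !mxE mulr1.
Qed.

Lemma pi_P : (0 < n)%N -> simple_graph e -> (forall i, 0 < c i) -> pim^T *m Pm = pim^T.
Proof.
move=> n0 Hg Hc; rewrite /Pm mulmxBr mulmx1.
suff -> : pim^T *m (Cm *m Lm) = 0 by rewrite subr0.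
apply/matrixP => i j; rewrite !mxE.
rewrite (eq_bigr (fun k => trC^-1 * Lm j k)); last first.
  move=> k _; rewrite (ord1 i) CL_entry mxE pi_entry (lap_sym Hg k j) mulrA -(mulrA _ _ (ratr _)) mulVf ?mulr1 //.
  by rewrite gt_eqF // ltr0q.
rewrite -mulr_sumr; have := congr1 (fun M : 'M[R]_(n,1) => M j 0) lap_row0.
by rewrite rowsum mxE => ->; rewrite mulr0.
Qed.

End Graph.

Lemma pow_diag_pos (R : realType) n (M : 'M[R]_n) : stoch M -> (forall i, 0 < M i i) ->
  forall k i, 0 < (M ^+ k) i i.
Proof.
move=> HM Hd; elim=> [|k IH] i; first by rewrite expr0 mxE eqxx.
rewrite exprS -mulmxE; apply: lt_le_trans (prod_lb i i i (proj1 HM) (proj1 (stochX k HM))).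
exact: mulr_gt0.
Qed.

Lemma pow_path_pos (R : realType) n (e : rel 'I_n) (M : 'M[R]_n) : stoch M ->
  (forall i, 0 < M i i) -> (forall i j, e i j -> 0 < M i j) ->
  forall i j, connect e i j -> exists m, forall k, (m <= k)%N -> 0 < (M ^+ k) i j.
Proof.
move=> HM Hd He i j /connectP [p Hp ->] {j}.
elim: p i Hp => [|y p IH] i /=.
  by move=> _; exists 0%N => k _; apply: pow_diag_pos.
case/andP => eiy Hp; have [m Hm] := IH y Hp.
exists m.+1 => -[//|k] Hk.
rewrite exprS -mulmxE; apply: lt_le_trans (prod_lb i y (last y p) (proj1 HM) (proj1 (stochX k HM))).
by apply: mulr_gt0; [apply: He | apply: Hm].
Qed.

Lemma mul_repl_last (R : ringType) n m (Y : 'M[R]_(m,n)) (Z : 'M[R]_n) y i j :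
  (Y *m repl_last Z y) i j = if (j : nat) == n.-1 then (Y *m y) i 0 else (Y *m Z) i j.
Proof.
rewrite mxE; case: ifP => H; rewrite mxE; apply: eq_bigr => k _; by rewrite /repl_last mxE H.
Qed.

Lemma mul_repl_lastE (R : ringType) n (Y : 'M[R]_n) (Z : 'M[R]_n) y :
  Y *m repl_last Z y = repl_last (Y *m Z) (Y *m y).
Proof. by apply/matrixP => i j; rewrite mul_repl_last /repl_last mxE. Qed.

Lemma abs_le_sum (R : realType) n (x : 'cV[R]_n) k :
  - (\sum_l `|x l 0|) <= x k 0 <= \sum_l `|x l 0|.
Proof.
rewrite -ler_norml (bigD1 k) //= lerDl.
by apply: sumr_ge0 => l _.
Qed.

Lemma sumP (R : realType) n (P : 'M[R]_n) t :
  (\sum_(s < t) P ^+ s) *m (1%:M - P) = 1%:M - P ^+ t.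
Proof.
elim: t => [|t IH]; first by rewrite big_ord0 mul0mx expr0 subrr.
rewrite big_ord_recr /= mulmxDl IH mulmxBr mulmx1 mulmxE -exprSr.
by rewrite addrA subrK.
Qed.

Theorem lemma3p10 (R : realType) (n : nat) (e : rel 'I_n) (c : 'I_n -> rat) :
  (0 < n)%N ->
  simple_graph e -> graph_connected e ->
  (forall i, 0 < c i) ->
  (forall i, c i * (deg e i)%:R < 1) ->
  let C : 'M[R]_n := diag_mx (\row_i ratr (c i)) in
  let L : 'M[R]_n := laplacian R e in
  let P : 'M[R]_n := 1%:M - C *m L in
  let pi : 'cV[R]_n :=
    (\tr (diag_mx (\row_i (ratr (c i))^-1)))^-1 *: \col_i (ratr (c i))^-1 in
  let one : 'cV[R]_n := ones R n in
  let S : nat -> 'M[R]_n := fun t =>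
    - (t%:R *: (one *m pi^T)) + \sum_(s < t) P ^+ s in
  repl_last (1%:M - P) one \in unitmx /\
  S @ \oo --> repl_last (1%:M - one *m pi^T) 0 *m invmx (repl_last (1%:M - P) one).
Proof.
move=> n0 Hg Hconn Hc Hcd C L P pi one S.
have HP : stoch P := P_stoch R Hg Hc Hcd.
have Hm : forall ij : 'I_n * 'I_n, exists m, forall k, (m <= k)%N -> 0 < (P ^+ k) ij.1 ij.2.
  move=> ij; apply: (pow_path_pos HP (P_diag_pos R Hg Hcd) (P_edge_pos R Hg Hc)).
  exact: Hconn.
case: (choice Hm) => m Hm'.
pose K := (\max_ij m ij).+1.
have K0 : (0 < K)%N by [].
have HKpos : forall i j, 0 < (P ^+ K) i j.
  move=> i j; apply: (Hm' (i, j)); apply: leqW; exact: (leq_bigmax (i, j)).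
have [d [d0 Hd]] := @fin_lb R _ (fun ij : 'I_n * 'I_n => (P ^+ K) ij.1 ij.2) (fun ij => HKpos ij.1 ij.2).
have Hd' : forall i j, d <= (P ^+ K) i j := fun i j => Hd (i, j).
pose rho := 1 - n%:R * d.
have rho0 : 0 <= rho.
  rewrite subr_ge0 -sum_constn -(@stoch_rows _ _ _ (stochX K HP) (Ordinal n0)).
  by apply: ler_sum => j _.
have rho1 : rho < 1.
  have : 0 < n%:R * d by apply: mulr_gt0 => //; rewrite ltr0n.
  rewrite /rho; lra.
have p0 := pi_nonneg R Hc.
have p1 := pi_sum1 R n0 Hc.
have pP : pi^T *m P = pi^T := pi_P R n0 Hg Hc.
have pone : pi^T *m one = 1 := pi_one R n0 Hc.
have MB := fun x a b Hx => main_bound HP (ltW d0) Hd' rho0 p0 p1 pP (x := x) (a := a) (b := b) Hx.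
have lstP : (n.-1 < n)%N by rewrite ltn_predL.
pose lst := Ordinal lstP.
set A := repl_last (1%:M - P) one.
have Hker : forall x : 'cV[R]_n, A *m x = 0 -> x = 0.
  move=> x Ax.
  have xl : x lst 0 = 0.
    have : (pi^T *m A *m x) 0 0 = 0 by rewrite -mulmxA Ax mulmx0 mxE.
    rewrite mxE (bigD1 lst) //= big1 ?addr0.
      by rewrite mul_repl_last eqxx pone mxE mul1r.
    move=> j Hj; rewrite mul_repl_last.
    have -> : ((j : nat) == n.-1) = false.
      by apply/negbTE; apply: contra Hj => /eqP h; apply/eqP/val_inj.
    by rewrite mulmxBr mulmx1 pP subrr mxE mul0r.
  have Ax' : (1%:M - P) *m x = 0.
    rewrite -Ax; apply/matrixP => i k; rewrite [LHS]mxE [RHS]mxE.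
    apply: eq_bigr => j _; rewrite /A /repl_last [in RHS]mxE; case: ifP => // h.
    have -> : j = lst by apply/val_inj/eqP.
    by rewrite (ord1 k) xl !mulr0.
  have Px : P *m x = x.
    move: Ax'; rewrite mulmxBl mul1mx => /eqP; rewrite subr_eq0 => /eqP H.
    by rewrite -H.
  have Ptx : forall t, P ^+ t *m x = x.
    elim=> [|t IH]; first by rewrite expr0 mul1mx.
    by rewrite exprSr -mulmxE -mulmxA Px.
  have Hx := abs_le_sum x.
  have Hi : forall i, x i 0 = (pi^T *m x) 0 0.
    move=> i; apply/eqP; rewrite -subr_eq0 -normr_eq0 eq_le normr_ge0 andbT.
    apply: (zero_of_pow rho0 rho1) => q.
    by have := MB x _ _ Hx (K * q)%N i; rewrite Ptx mulKn //; apply.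
  have m0 : (pi^T *m x) 0 0 = 0 by rewrite -(Hi lst) xl.
  by apply/matrixP => i k; rewrite (ord1 k) Hi m0 mxE.
have Aunit : A \in unitmx.
  rewrite -row_full_unit -cokermx_eq0; apply/eqP/matrixP => i j.
  have := Hker (col j (cokermx A)).
  rewrite colE mulmxA mulmx_coker mul0mx => /(_ erefl) /matrixP /(_ i 0).
  by rewrite -colE !mxE.
split => //.
have Sone : forall t, S t *m one = 0.
  move=> t; rewrite /S mulmxDl mulNmx -scalemxAl -mulmxA pone mulmx1 mulmx_suml.
  rewrite (eq_bigr (fun _ => one)); last by move=> s _; rewrite (proj2 (stochX s HP)).
  by rewrite sumr_const card_ord scaler_nat addNr.
have SP : forall t, S t *m (1%:M - P) = 1%:M - P ^+ t.
  move=> t; rewrite /S mulmxDl sumP mulNmx -scalemxAl -mulmxA.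
  have -> : pi^T *m (1%:M - P) = 0 by rewrite mulmxBr mulmx1 pP subrr.
  by rewrite mulmx0 scaler0 oppr0 add0r.
have SE : forall t, S t = repl_last (1%:M - P ^+ t) 0 *m invmx A.
  by move=> t; rewrite -[S t](mulmxK Aunit) /A mul_repl_lastE SP Sone.
pose Ai := invmx A.
pose W := \sum_k \sum_j `|Ai k j|.
have W0 : 0 <= W by apply: sumr_ge0 => k _; apply: sumr_ge0.
have W1 : 0 < W + 1 by lra.
apply/cvgrPdist_le => eps eps0.
have [q Hq] := small_pow rho0 rho1 (divr_gt0 eps0 W1).
exists (K * q)%N => // t /= Ht.
rewrite SE -mulmxBl.
rewrite /Num.norm /= mx_normrE; apply: bigmax_le => [|[i j] _ /=]; first exact: ltW.
rewrite mxE; apply: le_trans (ler_norm_sum _ _ _) _.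
have Hrq : rho ^+ (t %/ K) <= rho ^+ q.
  apply: ler_wiXn2l => //; first exact: ltW.
  by rewrite -(mulKn q K0); exact: leq_div2r.
have Hent : forall k, `|(repl_last (1%:M - one *m pi^T) 0 - repl_last (1%:M - P ^+ t) 0) i k| <= rho ^+ q.
  move=> k.
  have E1 : (repl_last (1%:M - one *m pi^T) 0 - repl_last (1%:M - P ^+ t) 0) i k
      = if (k : nat) == n.-1 then 0 else (P ^+ t) i k - pi k 0.
    rewrite /repl_last !mxE; case: ifP => _; first by rewrite subrr.
    rewrite big_ord1 !mxE; ring.
  rewrite E1; case: ifP => _; first by rewrite normr0 exprn_ge0 // ltW.
  apply: le_trans Hrq.
  have Hx : forall l, 0 <= (delta_mx k 0 : 'cV[R]_n) l 0 <= 1.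
    by move=> l; rewrite mxE eqxx andbT; case: (l == k); rewrite ?mulr1n ?mulr0n ?lexx ?ler01.
  have := MB (delta_mx k 0) 0 1 Hx t i.
  rewrite -!colE !mxE subr0 mulr1; apply.
apply: (@le_trans _ _ (\sum_k rho ^+ q * `|Ai k j|)).
  apply: ler_sum => k _; rewrite normrM; apply: ler_wpM2r => //; exact: Hent.
rewrite -mulr_sumr.
have HS : \sum_k `|Ai k j| <= W.
  apply: ler_sum => k _; rewrite (bigD1 j) //= lerDl.
  by apply: sumr_ge0.
rewrite ltr_pdivlMr // in Hq.
have r0 : 0 <= rho ^+ q by apply: exprn_ge0.
nra.
Qed.
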